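(* Let $n\ge 2$ and let $\ell_1,\ell_2,\ell_3\subset\mathbb R^n$ be lines through the origin. The following are equivalent: (1) $\dim(\ell_1+\ell_2+\ell_3)=2$; (2) for every triple of points $z_1,z_2,z_3\in\mathbb R^n$ there exists a rigid motion $g$ of $\mathbb R^n$ with $g(z_j)\in\ell_j$ for each $j=1,2,3$.
   Context: A rigid motion of $\mathbb R^n$ is a map $x\mapsto Rx+T$ with $R\in\mathrm{SO}(n)$ and $T\in\mathbb R^n$. *)

(* Defs.v *)
From mathcomp Require Import all_boot all_order all_algebra.
From mathcomp Require Import reals.
Set Implicit Arguments. Unset Strict Implicit. Unset Printing Implicit Defensive.
Import Order.TTheory GRing.Theory Num.Theory.
Local Open Scope ring_scope.

Definition SOmx (R : realType) (n : nat) (A : 'M[R]_n) : Prop :=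
  A *m A^T = 1%:M /\ \det A = 1.

Definition rigid_motion (R : realType) (n : nat) (g : 'rV[R]_n -> 'rV[R]_n) : Prop :=
  exists (A : 'M[R]_n) (T : 'rV[R]_n), SOmx A /\ forall x, g x = x *m A + T.

(* A line through the origin: a subspace (row space of a square matrix) of rank 1. *)
Definition line0 (R : realType) (n : nat) (L : 'M[R]_n) : Prop := \rank L = 1%N.

(* Main.v *)
Require Import Defs.
Set Warnings "-notation-overridden,-ambiguous-paths".
From mathcomp Require Import all_boot all_order all_algebra.
From mathcomp Require Import reals.
From mathcomp Require Import ring lra zify.
Import Order.TTheory GRing.Theory Num.Theory.
Local Open Scope ring_scope.
Set Implicit Arguments. Unset Strict Implicit. Unset Printing Implicit Defensive.

Section S.
Variable R : realType.

Lemma sylvester n k (A : 'M[R]_(n,k)) (B : 'M[R]_(k,n)) :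
  \det (1%:M + A *m B) = \det (1%:M + B *m A).
Proof.
have e1 : block_mx 1%:M (-A) B 1%:M =
   block_mx 1%:M 0 B 1%:M *m block_mx 1%:M (-A) 0 (1%:M + B *m A).
  rewrite mulmx_block ?mul1mx ?mulmx1 ?mul0mx ?mulmx0 ?addr0 ?add0r.
  by rewrite mulmxN addrCA addNr addr0.
have e2 : block_mx 1%:M (-A) B 1%:M =
   block_mx (1%:M + A *m B) (-A) 0 1%:M *m block_mx 1%:M 0 B 1%:M.
  rewrite mulmx_block ?mul1mx ?mulmx1 ?mul0mx ?mulmx0 ?addr0 ?add0r.
  by rewrite mulNmx addrK.
have := congr1 determinant e1; rewrite e2 !det_mulmx det_lblock det_ublock.
rewrite !det1 !mul1r !mulr1 det_ublock det1 mul1r; exact.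
Qed.
Lemma orth_update k n (X : 'M[R]_(k,n)) (M : 'M[R]_k) :
  M + M^T + M *m (X *m X^T) *m M^T = 0 ->
  (1%:M + X^T *m M *m X) *m (1%:M + X^T *m M *m X)^T = 1%:M.
Proof.
move=> H.
rewrite raddfD /= trmx1 !trmx_mul trmxK mulmxDl !mulmxDr !mul1mx !mulmx1.
have -> : X^T *m M *m X *m (X^T *m (M^T *m X)) = X^T *m (M *m (X *m X^T) *m M^T) *m X.
  by rewrite !mulmxA.
have -> : X^T *m (M^T *m X) = X^T *m M^T *m X by rewrite mulmxA.
have E : X^T *m (M + M^T + M *m (X *m X^T) *m M^T) *m X =
  X^T *m M *m X + X^T *m M^T *m X + X^T *m (M *m (X *m X^T) *m M^T) *m X.
  by rewrite !mulmxDr !mulmxDl.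
rewrite -addrA; suff -> : X^T *m M^T *m X +
  (X^T *m M *m X + X^T *m (M *m (X *m X^T) *m M^T) *m X) = 0 by rewrite addr0.
by rewrite addrA (addrC (X^T *m M^T *m X)) -E H mulmx0 mul0mx.
Qed.


Definition dot n (x y : 'rV[R]_n) := (x *m y^T) 0 0.

Lemma dotE n (x y : 'rV[R]_n) : x *m y^T = (dot x y)%:M.
Proof. exact: mx11_scalar. Qed.

Lemma dotC n (x y : 'rV[R]_n) : dot x y = dot y x.
Proof. by have := congr1 (fun A : 'M[R]_1 => A 0 0) (trmx_mul x y^T); rewrite trmxK mxE /dot => ->. Qed.

Lemma dot_sum n (x : 'rV[R]_n) : dot x x = \sum_j x 0 j ^+ 2.
Proof. by rewrite /dot mxE; apply: eq_bigr => j _; rewrite mxE expr2. Qed.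

Lemma dot_ge0 n (x : 'rV[R]_n) : 0 <= dot x x.
Proof. by rewrite dot_sum sumr_ge0 // => j _; rewrite sqr_ge0. Qed.

Lemma dot_eq0 n (x : 'rV[R]_n) : (dot x x == 0) = (x == 0).
Proof.
apply/idP/eqP => [|->]; last by rewrite /dot mul0mx mxE.
rewrite dot_sum psumr_eq0 => [/allP H|j _]; last by rewrite sqr_ge0.
apply/rowP => j; rewrite mxE; apply/eqP; rewrite -sqrf_eq0.
by apply: (implyP (H j (mem_index_enum j))).
Qed.


Lemma dotDl n (x y z : 'rV[R]_n) : dot (x + y) z = dot x z + dot y z.
Proof. by rewrite /dot mulmxDl mxE. Qed.
Lemma dotNl n (x z : 'rV[R]_n) : dot (- x) z = - dot x z.
Proof. by rewrite /dot mulNmx mxE. Qed.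
Lemma dotBl n (x y z : 'rV[R]_n) : dot (x - y) z = dot x z - dot y z.
Proof. by rewrite dotDl dotNl. Qed.
Lemma dotZl n a (x z : 'rV[R]_n) : dot (a *: x) z = a * dot x z.
Proof. by rewrite /dot -scalemxAl mxE. Qed.
Lemma dotDr n (x y z : 'rV[R]_n) : dot z (x + y) = dot z x + dot z y.
Proof. by rewrite dotC dotDl !(dotC z). Qed.
Lemma dotBr n (x y z : 'rV[R]_n) : dot z (x - y) = dot z x - dot z y.
Proof. by rewrite dotC dotBl !(dotC z). Qed.
Lemma dotZr n a (x z : 'rV[R]_n) : dot z (a *: x) = a * dot z x.
Proof. by rewrite dotC dotZl dotC. Qed.

Definition nrm n (x : 'rV[R]_n) := (Num.sqrt (dot x x))^-1 *: x.

Lemma dot_nrm n (x : 'rV[R]_n) : x != 0 -> dot (nrm x) (nrm x) = 1.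
Proof.
move=> nx; rewrite /nrm dotZl dotZr mulrA -expr2 exprVn sqr_sqrtr ?dot_ge0 //.
by rewrite mulVf // dot_eq0.
Qed.

Lemma dot_sqrt n (x : 'rV[R]_n) (u : 'rV[R]_n) : dot u u = 1 ->
  dot (Num.sqrt (dot x x) *: u) (Num.sqrt (dot x x) *: u) = dot x x.
Proof.
by move=> uu; rewrite dotZl dotZr uu mulr1 -expr2 sqr_sqrtr ?dot_ge0.
Qed.

Definition hh n (w : 'rV[R]_n) : 'M[R]_n :=
  1%:M + w^T *m (- 2 / dot w w)%:M *m w.

Lemma hhE n (w x : 'rV[R]_n) : x *m hh w = x + (- 2 / dot w w * dot x w) *: w.
Proof.
rewrite /hh mulmxDr mulmx1 !mulmxA dotE -scalar_mxM mul_scalar_mx mulrC.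
by [].
Qed.

Lemma hh_orth n (w : 'rV[R]_n) : hh w *m (hh w)^T = 1%:M.
Proof.
apply: orth_update; rewrite tr_scalar_mx dotE -!scalar_mxM -!raddfD /=.
suff -> : -2 / dot w w + -2 / dot w w + -2 / dot w w * dot w w * (-2 / dot w w) = 0.
  by apply/matrixP => i j; rewrite !mxE mul0rn.
have [w0|w0] := eqVneq (dot w w) 0; first by rewrite w0 invr0 mulr0 !mul0r !addr0.
by field.
Qed.

Lemma hh_det n (w : 'rV[R]_n) : \det (hh w) = if w == 0 then 1 else -1.
Proof.
rewrite /hh -mulmxA sylvester -mulmxA dotE -scalar_mxM -raddfD /= det_mx11 mxE.
rewrite eqxx mulr1n -dot_eq0.
have [w0|w0] := eqVneq (dot w w) 0; first by rewrite w0 mulr0 addr0.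
by field.
Qed.

Lemma hh_fix n (w x : 'rV[R]_n) : dot x w = 0 -> x *m hh w = x.
Proof. by move=> h; rewrite hhE h mulr0 scale0r addr0. Qed.

Lemma hh_map n (a b : 'rV[R]_n) : dot a a = dot b b -> a *m hh (a - b) = b.
Proof.
move=> ab; rewrite hhE.
have dww : dot (a - b) (a - b) = 2 * (dot a a - dot a b).
  rewrite !dotBl !dotBr -ab (dotC b a); ring.
have daw : dot a (a - b) = dot a a - dot a b by rewrite dotBr.
have [t0|t0] := eqVneq (dot a a - dot a b) 0.
  have : a - b == 0 by rewrite -dot_eq0 dww t0 mulr0.
  by rewrite subr_eq0 => /eqP <-; rewrite subrr scaler0 addr0.
rewrite dww daw.
have -> : - 2 / (2 * (dot a a - dot a b)) * (dot a a - dot a b) = -1 by field.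
by rewrite scaleN1r opprB addrC subrK.
Qed.


Lemma det2 (A : 'M[R]_2) : \det A = A 0 0 * A 1 1 - A 0 1 * A 1 0.
Proof.
rewrite (expand_det_row _ 0) !big_ord_recr big_ord0 /= add0r /cofactor !det_mx11 !mxE /=.
have -> : widen_ord (leqnSn 1) ord_max = 0 :> 'I_2 by apply/val_inj.
have -> : lift 0 0 = 1 :> 'I_2 by apply/val_inj.
have -> : ord_max = 1 :> 'I_2 by apply/val_inj.
have -> : lift (1 : 'I_2) (0 : 'I_1) = 0 :> 'I_2 by apply/val_inj.
by rewrite expr0 expr1 mul1r mulN1r mulrN.
Qed.

Definition Kmx : 'M[R]_2 := \matrix_(i,j)
  (if (val i == 0%N) && (val j == 1%N) then 1 else
   if (val i == 1%N) && (val j == 0%N) then -1 else 0).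

Definition Mcs c s : 'M[R]_2 := (c - 1)%:M + s *: Kmx.

Lemma Mcs_ok c s : c ^+ 2 + s ^+ 2 = 1 ->
  Mcs c s + (Mcs c s)^T + Mcs c s *m 1%:M *m (Mcs c s)^T = 0.
Proof.
move=> h; rewrite mulmx1; apply/matrixP => i j; rewrite !mxE.
rewrite !big_ord_recr big_ord0 /= !mxE.
move: i j => [[|[|i]] Hi] [[|[|j]] Hj] //=; rewrite ?mulr1n ?mulr0n; nra.
Qed.

Definition rot n (W : 'M[R]_(2,n)) c s : 'M[R]_n := 1%:M + W^T *m Mcs c s *m W.

Lemma rot_orth n (W : 'M[R]_(2,n)) c s : W *m W^T = 1%:M -> c ^+ 2 + s ^+ 2 = 1 ->
  rot W c s *m (rot W c s)^T = 1%:M.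
Proof. by move=> WW h; apply: orth_update; rewrite WW; apply: Mcs_ok. Qed.

Lemma rot_det n (W : 'M[R]_(2,n)) c s : W *m W^T = 1%:M -> c ^+ 2 + s ^+ 2 = 1 ->
  \det (rot W c s) = 1.
Proof.
move=> WW h; rewrite /rot -mulmxA sylvester -mulmxA WW mulmx1 det2 !mxE /=.
rewrite ?mulr1n ?mulr0n; nra.
Qed.

Lemma projW m n (W : 'M[R]_(2,n)) (x : 'M[R]_(m,n)) : W *m W^T = 1%:M -> (x <= W)%MS ->
  x *m W^T *m W = x.
Proof. by move=> WW /submxP [y ->]; rewrite -(mulmxA y) WW mulmx1. Qed.

Lemma rot_apply n (W : 'M[R]_(2,n)) c s (x : 'rV[R]_n) : W *m W^T = 1%:M -> (x <= W)%MS ->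
  x *m rot W c s = c *: x + s *: (x *m (W^T *m Kmx *m W)).
Proof.
move=> WW xW; rewrite /rot /Mcs mulmxDr mulmx1 mulmxDr mulmxDl mulmxDr.
have -> : x *m (W^T *m (c - 1)%:M *m W) = (c - 1) *: x.
  by rewrite mul_mx_scalar -scalemxAl -scalemxAr mulmxA projW.
have -> : x *m (W^T *m (s *: Kmx) *m W) = s *: (x *m (W^T *m Kmx *m W)).
  by rewrite -scalemxAr -scalemxAl -scalemxAr.
by rewrite addrA; congr (_ + _); rewrite scalerBl scale1r addrC subrK.
Qed.

Lemma nz_vec m n (L : 'M[R]_(m,n)) : L != 0 -> exists2 s : 'rV_n, (s <= L)%MS & s != 0.
Proof.
move=> nL; case: (pickP (fun i => row i L != 0)) => [i Hi|H].
  by exists (row i L); rewrite ?row_sub.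
case/eqP: nL; apply/row_matrixP => i; rewrite row0.
by move/negbFE/eqP: (H i).
Qed.

Lemma key k n (V : 'M[R]_(k,n)) (y1 y2 : 'rV[R]_n) :
  (\rank (V + col_mx y1 y2) <= \rank V + 1)%N ->
  exists c s, c ^+ 2 + s ^+ 2 = 1 /\ ((c *: y1 + s *: y2)%R <= V)%MS.
Proof.
move=> hr.
suff [x [nx xV]] : exists x : 'rV_2, x != 0 /\ (x *m col_mx y1 y2 <= V)%MS.
  have E : x *m col_mx y1 y2 = x 0 0 *: y1 + x 0 1 *: y2.
    apply/rowP => j; rewrite mxE !big_ord_recr big_ord0 /= add0r.
    have -> : widen_ord (leqnSn 1) ord_max = lshift 1 (0:'I_1) by apply/val_inj.
    have -> : ord_max = rshift 1 (0:'I_1) :> 'I_(1+1) by apply/val_inj.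
    rewrite (col_mxEu y1 y2) (col_mxEd y1 y2) !mxE.
    have -> : lshift 1 (0:'I_1) = 0 :> 'I_2 by apply/val_inj.
    by have -> : rshift 1 (0:'I_1) = 1 :> 'I_2 by apply/val_inj.
  move: xV nx; rewrite E.
  set a := x 0 0; set b := x 0 1 => xV nx.
  have ab : 0 < a ^+ 2 + b ^+ 2.
    rewrite lt_def addr_ge0 ?sqr_ge0 // andbT; apply: contra nx => /eqP h.
    have a0 : a = 0 by nra.
    have b0 : b = 0 by nra.
    apply/eqP/rowP => j; rewrite mxE.
    have := ltn_ord j; case: j => [[|[|j]] Hj] _ //.
      by rewrite -a0; congr (x 0 _); apply/val_inj.
    by rewrite -b0; congr (x 0 _); apply/val_inj.
  set r := Num.sqrt (a ^+ 2 + b ^+ 2).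
  have r0 : 0 < r by rewrite sqrtr_gt0.
  exists (a / r), (b / r); split.
    rewrite !expr_div_n sqr_sqrtr ?ltW // -mulrDl divff //.
    by rewrite gt_eqF.
  rewrite [X in (X <= V)%MS](_ : _ = r^-1 *: (a *: y1 + b *: y2))%R.
    exact: scalemx_sub.
  by rewrite scalerDr !scalerA !(mulrC r^-1).
set Y := col_mx y1 y2.
have [rY|rY] := eqVneq (\rank Y) 2%N.
  have := mxrank_sum_cap V Y; rewrite rY => hs.
  have : (V :&: Y)%MS != 0.
    rewrite -mxrank_eq0; apply/eqP => h0; move: hs hr; rewrite -/Y h0; lia.
  case/nz_vec => z + nz; rewrite sub_capmx => /andP [zV /submxP [x zx]].
  exists x; split; last by rewrite -zx.
  by apply: contra nz => /eqP x0; rewrite zx x0 mul0mx.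
have : kermx Y != 0.
  rewrite -mxrank_eq0 mxrank_ker; have := rank_leq_row Y; move: rY; lia.
case/nz_vec => x /sub_kermxP x0 nx; exists x; split => //.
by rewrite x0 sub0mx.
Qed.

Lemma subB_sub m1 m2 n (A B : 'M[R]_(m1, n)) (C : 'M[R]_(m2, n)) :
  (A <= C)%MS -> (B <= C)%MS -> ((A - B)%R <= C)%MS.
Proof. by move=> hA hB; apply: addmx_sub => //; rewrite eqmx_opp. Qed.

Lemma rank1_nz n (L : 'M[R]_n) : \rank L = 1%N -> L != 0.
Proof. by move=> h; rewrite -mxrank_eq0 h. Qed.

Lemma onb n (L1 L2 : 'M[R]_n) : \rank L1 = 1%N -> \rank L2 = 1%N ->
  \rank (L1 + L2)%MS = 2%N ->
  exists W : 'M[R]_(2,n), W *m W^T = 1%:M /\ (W :=: L1 + L2)%MS.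
Proof.
move=> r1 r2 r12.
have cap0 : (L1 :&: L2)%MS == 0.
  by rewrite -mxrank_eq0; have := mxrank_sum_cap L1 L2; rewrite r1 r2 r12; lia.
case: (nz_vec (rank1_nz r1)) => s1 s1L nz1.
case: (nz_vec (rank1_nz r2)) => s2 s2L nz2.
pose u := nrm s1.
have uu : dot u u = 1 by apply: dot_nrm.
have uL : (u <= L1)%MS by apply: scalemx_sub.
pose r := (s2 - dot s2 u *: u)%R.
have nr : r != 0.
  apply: contra nz2 => /eqP r0.
  have e : s2 = dot s2 u *: u by apply/eqP; rewrite -subr_eq0; exact/eqP.
  rewrite -submx0 -(eqP cap0) sub_capmx s2L andbT e.
  exact: scalemx_sub.
pose v := nrm r.
have vv : dot v v = 1 by apply: dot_nrm.
have uv : dot u v = 0.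
  have hur : dot u r = 0 by rewrite /r dotBr dotZr uu mulr1 (dotC u s2) subrr.
  by rewrite /v [nrm r]/nrm dotZr hur mulr0.
pose W := col_mx u v.
have WW : W *m W^T = 1%:M.
  rewrite /W tr_col_mx mul_col_row !dotE uu vv (dotC v u) uv.
  by rewrite raddf0 -scalar_mx_block.
exists W; split => //.
have WS : (W <= L1 + L2)%MS.
  rewrite col_mx_sub; apply/andP; split.
    exact: submx_trans uL (addsmxSl _ _).
  apply: scalemx_sub; apply: subB_sub.
    exact: submx_trans s2L (addsmxSr _ _).
  apply: scalemx_sub; exact: submx_trans uL (addsmxSl _ _).
have rW : \rank W = 2%N.
  apply/eqP; rewrite eqn_leq rank_leq_row /=.
  by rewrite -{1}(mxrank1 R 2) -WW mxrankM_maxl.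
apply/eqmxP; have := (mxrank_leqif_eq WS).2; rewrite rW r12 eqxx => <-; done.
Qed.

Lemma dot_row m n (W : 'M[R]_(m,n)) i j : dot (row i W) (row j W) = (W *m W^T) i j.
Proof. by rewrite /dot !mxE; apply: eq_bigr => k _; rewrite !mxE. Qed.

Lemma orth_mul n (A B : 'M[R]_n) : A *m A^T = 1%:M -> B *m B^T = 1%:M ->
  (A *m B) *m (A *m B)^T = 1%:M.
Proof.
move=> hA hB; rewrite trmx_mul mulmxA -(mulmxA A) hB mulmx1 hA //.
Qed.

Lemma place n (W : 'M[R]_(2,n)) (d2 d3 : 'rV[R]_n) : W *m W^T = 1%:M ->
  exists A0 : 'M[R]_n, A0 *m A0^T = 1%:M /\ \det A0 = 1 /\
    (d2 *m A0 <= W)%MS /\ (d3 *m A0 <= W)%MS.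
Proof.
move=> WW.
pose u := row 0 W; pose v := row 1 W.
have uu : dot u u = 1 by rewrite dot_row WW mxE.
have vv : dot v v = 1 by rewrite dot_row WW mxE.
have uv : dot u v = 0 by rewrite dot_row WW mxE.
have uW : (u <= W)%MS by apply: row_sub.
have vW : (v <= W)%MS by apply: row_sub.
pose b2 := Num.sqrt (dot d2 d2) *: u.
pose H1 := hh (d2 - b2).
have e2 : d2 *m H1 = b2 by apply: hh_map; rewrite dot_sqrt.
pose e := d3 *m H1.
pose r := (e - dot e u *: u)%R.
pose b3 := Num.sqrt (dot r r) *: v.
pose H2 := hh (r - b3).
have e3 : r *m H2 = b3 by apply: hh_map; rewrite dot_sqrt.
have fu : u *m H2 = u.
  apply: hh_fix; rewrite /b3 /r dotBr dotBr !dotZr uu uv (dotC u e).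
  by rewrite mulr1 mulr0 subrr subr0.
pose A1 := H1 *m H2.
have oA1 : A1 *m A1^T = 1%:M by apply: orth_mul; apply: hh_orth.
have s2 : (d2 *m A1 <= W)%MS.
  by rewrite /A1 mulmxA e2 /b2 -scalemxAl fu; apply: scalemx_sub.
have s3 : (d3 *m A1 <= W)%MS.
  rewrite /A1 mulmxA -/e.
  have -> : e = (r + dot e u *: u)%R by rewrite /r subrK.
  rewrite mulmxDl e3 -scalemxAl fu.
  by apply: addmx_sub; apply: scalemx_sub.
have dA1 : \det A1 = 1 \/ \det A1 = -1.
  rewrite det_mulmx !hh_det; case: (_ == 0); case: (_ == 0);
    rewrite ?mul1r ?mulr1 ?mulN1r ?opprK; by [left|right].
case: dA1 => dA1.
  by exists A1.
have nu : u != 0 by rewrite -dot_eq0 uu oner_neq0.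
exists (A1 *m hh u); split; first by apply: orth_mul => //; apply: hh_orth.
split; first by rewrite det_mulmx dA1 hh_det (negbTE nu) mulrNN mulr1.
split; rewrite mulmxA hhE; apply: addmx_sub => //; exact: scalemx_sub.
Qed.

Lemma core n (L1 L2 L3 : 'M[R]_n) : \rank L1 = 1%N -> \rank L2 = 1%N -> \rank L3 = 1%N ->
  \rank (L1 + L2)%MS = 2%N -> (L3 <= L1 + L2)%MS ->
  forall z1 z2 z3 : 'rV[R]_n,
     exists g : 'rV[R]_n -> 'rV[R]_n,
       rigid_motion g /\
       (g z1 <= L1)%MS /\ (g z2 <= L2)%MS /\ (g z3 <= L3)%MS.
Proof.
move=> r1 r2 r3 r12 s3 z1 z2 z3.
have [W [WW WS]] := onb r1 r2 r12.
have [A0 [oA0 [dA0 [sa sb]]]] := place (z2 - z1) (z3 - z1) WW.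
pose J := W^T *m Kmx *m W.
pose a1 := (z2 - z1) *m A0; pose b1 := (z3 - z1) *m A0.
pose a2 := a1 *m J; pose b2 := b1 *m J.
pose P := proj_mx L1 L2.
have JW : forall x : 'rV[R]_n, (x *m J <= W)%MS by move=> x; rewrite /J mulmxA submxMl.
have a1S : (a1 <= L1 + L2)%MS by rewrite -WS.
have b1S : (b1 <= L1 + L2)%MS by rewrite -WS.
have a2S : (a2 <= L1 + L2)%MS by rewrite -WS JW.
have b2S : (b2 <= L1 + L2)%MS by rewrite -WS JW.
have PS : forall x : 'rV[R]_n, (x *m P <= L1 + L2)%MS.
  by move=> x; apply: submx_trans (proj_mx_sub _ _ _) (addsmxSl _ _).
pose w1 := (b1 - a1 *m P)%R; pose w2 := (b2 - a2 *m P)%R.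
have [c [s [cs wL]]] : exists c s, c ^+ 2 + s ^+ 2 = 1 /\ ((c *: w1 + s *: w2)%R <= L3)%MS.
  apply: key; rewrite r3.
  have : (L3 + col_mx w1 w2 <= L1 + L2)%MS.
    rewrite addsmx_sub s3 col_mx_sub /w1 /w2.
    by rewrite !subB_sub.
  by move/mxrankS; rewrite r12.
pose A := A0 *m rot W c s.
pose a := (c *: a1 + s *: a2)%R.
pose x1 := - (a *m P).
pose g := fun x => x *m A + (x1 - z1 *m A).
have gz : forall z, g z = (z - z1) *m A + x1.
  by move=> z; rewrite /g mulmxBl addrCA addrC.
have dA : forall z, ((z - z1) *m A0 <= W)%MS ->
    (z - z1) *m A = c *: ((z - z1) *m A0) + s *: ((z - z1) *m A0 *m J).
  by move=> z zW; rewrite /A mulmxA rot_apply.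
exists g; split.
  exists A, (x1 - z1 *m A); split => //; split.
    by apply: orth_mul => //; apply: rot_orth.
  by rewrite det_mulmx dA0 rot_det // mul1r.
split; first by rewrite gz subrr mul0mx add0r /x1 eqmx_opp proj_mx_sub.
split.
  rewrite gz dA // -/a1 -/a2 -/a /x1.
  by apply: proj_mx_compl_sub; rewrite addmx_sub // scalemx_sub.
rewrite gz dA // -/b1 -/b2 /x1.
suff -> : (c *: b1 + s *: b2 + - (a *m P))%R = (c *: w1 + s *: w2)%R by [].
rewrite /a /w1 /w2 mulmxDl -!scalemxAl !scalerBr opprD addrACA.
by [].
Qed.

Lemma rank1_nzg m n (L : 'M[R]_(m,n)) : \rank L = 1%N -> L != 0.
Proof. by move=> h; rewrite -mxrank_eq0 h. Qed.

Lemma rank_adds_le m1 m2 n (A : 'M[R]_(m1,n)) (B : 'M[R]_(m2,n)) :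
  (\rank (A + B)%MS <= \rank A + \rank B)%N.
Proof. by have := mxrank_sum_cap A B; lia. Qed.

Lemma orth_free n (A : 'M[R]_n) : A *m A^T = 1%:M -> row_free A.
Proof.
move=> h; rewrite /row_free eqn_leq rank_leq_col /=.
by rewrite -{1}(mxrank1 R n) -h mxrankM_maxl.
Qed.

End S.

Theorem proposition3p4 (R : realType) (n : nat) (L1 L2 L3 : 'M[R]_n) :
  (2 <= n)%N -> line0 L1 -> line0 L2 -> line0 L3 ->
  (\rank (L1 + L2 + L3)%MS = 2%N <->
   forall z1 z2 z3 : 'rV[R]_n,
     exists g : 'rV[R]_n -> 'rV[R]_n,
       rigid_motion g /\
       (g z1 <= L1)%MS /\ (g z2 <= L2)%MS /\ (g z3 <= L3)%MS).
Proof.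
rewrite /line0 => n2 r1 r2 r3.
have s12 : (L1 + L2 <= L1 + L2 + L3)%MS by apply: addsmxSl.
have s1 : (L1 <= L1 + L2 + L3)%MS by apply: submx_trans (addsmxSl _ _) s12.
have s2 : (L2 <= L1 + L2 + L3)%MS by apply: submx_trans (addsmxSr _ _) s12.
have s3 : (L3 <= L1 + L2 + L3)%MS by apply: addsmxSr.
have r12ge : (1 <= \rank (L1 + L2)%MS)%N by rewrite -r1 mxrankS // addsmxSl.
split => [rS | H].
  have r12le : (\rank (L1 + L2)%MS <= 2)%N by rewrite -rS mxrankS.
  have [e12|ne12] := eqVneq (\rank (L1 + L2)%MS) 2%N.
    apply: core => //.
    have := (mxrank_leqif_eq s12).2; rewrite e12 rS eqxx => /esym/eqmxP ->.
    exact: s3.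
  have e12 : \rank (L1 + L2)%MS = 1%N by lia.
  have := (mxrank_leqif_eq (addsmxSl L1 L2)).2; rewrite e12 r1 eqxx => /esym/eqmxP E1.
  have L21 : (L2 <= L1)%MS by rewrite E1 addsmxSr.
  have r13 : \rank (L1 + L3)%MS = 2%N.
    rewrite -rS; apply/eqP; rewrite eqn_leq; apply/andP; split; apply: mxrankS.
      by rewrite addsmx_sub s1 s3.
    rewrite !addsmx_sub addsmxSl addsmxSr andbT /=.
    exact: submx_trans L21 (addsmxSl _ _).
  move=> z1 z2 z3.
  have [g [rg [g1 [g3 g2]]]] := core r1 r3 r2 r13 (submx_trans L21 (addsmxSl _ _)) z1 z3 z2.
  by exists g.
have rSge : (1 <= \rank (L1 + L2 + L3)%MS)%N by rewrite -r1 mxrankS.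
have rSle : (\rank (L1 + L2 + L3)%MS <= 3)%N.
  have := rank_adds_le (L1 + L2)%MS L3; have := rank_adds_le L1 L2; lia.
have [e3|ne3] := eqVneq (\rank (L1 + L2 + L3)%MS) 3%N.
  exfalso.
  have hs := mxrank_sum_cap (L1 + L2)%MS L3.
  have r12le : (\rank (L1 + L2)%MS <= 2)%N by have := rank_adds_le L1 L2; lia.
  have c3 : ((L1 + L2) :&: L3)%MS == 0 by rewrite -mxrank_eq0; lia.
  have c12 : (L1 :&: L2)%MS == 0.
    by rewrite -mxrank_eq0; have := mxrank_sum_cap L1 L2; lia.
  pose e : 'rV[R]_n := pid_mx 1.
  have ne : e != 0 by apply: rank1_nzg; rewrite rank_pid_mx //; lia.
  have [g [[A [T [[oA _] gE]]] [g1 [g2 g3]]]] := H 0 e (2 *: e).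
  move: g1 g2 g3; rewrite !gE mul0mx add0r -scalemxAl => g1 g2 g3.
  have x3 : (2 *: (e *m A) + T)%R = (2 *: (e *m A + T) - T)%R.
    by rewrite scalerDr -addrA; congr (_ + _); rewrite scaler_nat mulr2n addrK.
  have x30 : (2 *: (e *m A) + T)%R = 0.
    apply/eqP; rewrite -submx0 -(eqP c3) sub_capmx g3 andbT x3.
    apply: subB_sub; first by apply: scalemx_sub; apply: submx_trans g2 (addsmxSr _ _).
    exact: submx_trans g1 (addsmxSl _ _).
  have hT : (2 *: (e *m A + T))%R = T by apply/eqP; rewrite -subr_eq0 -x3 x30.
  have x20 : (2 *: (e *m A + T))%R = 0.
    apply/eqP; rewrite -submx0 -(eqP c12) sub_capmx {1}hT g1 /=.
    exact: scalemx_sub.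
  have T0 : T = 0 by rewrite -hT x20.
  have eA0 : e *m A = 0.
    by move/eqP: x20; rewrite scaler_eq0 pnatr_eq0 /= T0 addr0 => /eqP.
  by case/negP: ne; apply/eqP; rewrite -(mulmx1 e) -oA mulmxA eA0 mul0mx.
have [e2|ne2] := eqVneq (\rank (L1 + L2 + L3)%MS) 2%N; first by [].
exfalso.
have e1 : \rank (L1 + L2 + L3)%MS = 1%N by lia.
have := (mxrank_leqif_eq s1).2; rewrite e1 r1 eqxx => /esym/eqmxP E1.
have := (mxrank_leqif_eq s2).2; rewrite e1 r2 eqxx => /esym/eqmxP E2.
have := (mxrank_leqif_eq s3).2; rewrite e1 r3 eqxx => /esym/eqmxP E3.
pose E : 'M[R]_(2, n) := pid_mx 2.
have rE : \rank E = 2%N by rewrite rank_pid_mx.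
have [g [[A [T [[oA _] gE]]] [g1 [g2 g3]]]] := H 0 (row 0 E) (row 1 E).
move: g1 g2 g3; rewrite !gE mul0mx add0r E1 E2 E3 => g1 g2 g3.
have EA : (E *m A <= L1 + L2 + L3)%MS.
  apply/row_subP => i; rewrite row_mul.
  have := ltn_ord i; case: i => [[|[|i]] Hi] _ //.
    have -> : Ordinal Hi = 0 by apply/val_inj.
    by rewrite -(addrK T (row 0 E *m A)); apply: subB_sub.
  have -> : Ordinal Hi = 1 by apply/val_inj.
  by rewrite -(addrK T (row 1 E *m A)); apply: subB_sub.
have := mxrankS EA; rewrite mxrankMfree ?orth_free // rE e1.
by [].
Qed.
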